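(* In the setting below, assume each $f_i$ is $L_i$-smooth, $B_f(x,y)\ge\frac{\mu_f}{2}\|x-y\|^2$ for all $x,y$ for some $\mu_f\ge0$, $\psi$ satisfies the $\mu_\psi$-condition, and $\eta_k\le\frac1{2n\sqrt{\bar LL^*}}$ for all $k\in[K]$. Then for any permutations and every $k\in[K]$, $$\|x_{k+1}-x_*\|^2\le\frac{\|x_*-x_1\|^2}{\prod_{s=1}^k\big(1+n\eta_s(\mu_f+2\mu_\psi)\big)}+\sum_{\ell=1}^k\frac{8n\eta_\ell^3R_\ell}{\prod_{s=\ell}^k\big(1+n\eta_s(\mu_f+2\mu_\psi)\big)},$$ where $R_\ell=\sum_{i=2}^n\frac{L_{\sigma_\ell^i}}{n}\Big\|\sum_{j=1}^{i-1}\nabla f_{\sigma_\ell^j}(x_* )\Big\|^2$.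
   Context: Setting. Let $n,d\in\mathbb N$, let $f_1,\dots,f_n:\mathbb R^d\to\mathbb R$ be convex, $f=\frac1n\sum_{i=1}^nf_i$, let $\psi:\mathbb R^d\to\mathbb R\cup\{+\infty\}$ be proper, closed and convex, and $F=f+\psi$. For a convex function $g$, $\nabla g(x)$ denotes an element of $\partial g(x)$, and $B_g(x,y)=g(x)-g(y)-\langle\nabla g(y),x-y\rangle$. The $\mu_\psi$-condition: $\mu_\psi\ge0$ and $B_\psi(x,y)\ge\frac{\mu_\psi}{2}\|x-y\|^2$ for all $x,y$ with $\partial\psi(y)\neq\emptyset$ and every choice of $\nabla\psi(y)\in\partial\psi(y)$. Assume there is $x_*\in\mathbb R^d$ with $F(x_* )=\inf_{x}F(x)\in\mathbb R$. Proximal shuffling gradient method: given $x_1\in\mathrm{dom}\,\psi$, a number of epochs $K\ge2$ and stepsizes $\eta_k>0$, for $k=1,\dots,K$: choose a permutation $\sigma_k=(\sigma_k^1,\dots,\sigma_k^n)$ of $[n]=\{1,\dots,n\}$; set $x_k^1=x_k$ and $x_k^{i+1}=x_k^i-\eta_k\nabla f_{\sigma_k^i}(x_k^i)$ for $i=1,\dots,n$; set $x_{k+1}=\arg\min_{x\in\mathbb R^d}\{n\psi(x)+\frac{1}{2\eta_k}\|x-x_k^{n+1}\|^2\}$. Smoothness: each $f_i$ is differentiable with $\|\nabla f_i(x)-\nabla f_i(y)\|\le L_i\|x-y\|$ for all $x,y$, $L_i>0$; $\bar L=\frac1n\sum_iL_i$, $L^*=\max_iL_i$. *)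

(* Defs.v *)
From HB Require Import structures.
From mathcomp Require Import all_boot all_order all_algebra all_fingroup.
From mathcomp Require Import all_classical all_reals all_analysis.
Set Implicit Arguments. Unset Strict Implicit. Unset Printing Implicit Defensive.
Import Order.TTheory GRing.Theory Num.Theory numFieldNormedType.Exports.
Local Open Scope ring_scope.

Section Defs.
Variables (R : realType) (d : nat).
Notation vec := 'rV[R]_d.

Definition dotp (u v : vec) : R := \sum_(i < d) u ord0 i * v ord0 i.
Definition enorm (u : vec) : R := Num.sqrt (dotp u u).
Definition sqnorm (u : vec) : R := enorm u ^+ 2.

Definition convex_fun (f : vec -> R) : Prop :=
  forall (x y : vec) (t : R), 0 <= t <= 1 ->
    f (t *: x + (1 - t) *: y) <= t * f x + (1 - t) * f y.

Definition is_gradient (f : vec -> R) (g : vec -> vec) : Prop :=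
  forall x : vec, differentiable f x /\ forall v : vec, 'd f x v = dotp (g x) v.

Definition lipschitz_grad (g : vec -> vec) (L : R) : Prop :=
  forall x y : vec, enorm (g x - g y) <= L * enorm (x - y).

Definition never_minfty (psi : vec -> \bar R) : Prop :=
  forall x, psi x != -oo%E.

Definition proper_fun (psi : vec -> \bar R) : Prop :=
  never_minfty psi /\ exists x, psi x \is a fin_num.

Definition closed_fun (psi : vec -> \bar R) : Prop :=
  closed [set p : vec * R | (psi p.1 <= p.2%:E)%E].

Definition convex_efun (psi : vec -> \bar R) : Prop :=
  forall (x y : vec) (t : R), 0 < t < 1 ->
    (psi (t *: x + (1 - t) *: y)%R <= t%:E * psi x + (1 - t)%:E * psi y)%E.

Definition subgrad (psi : vec -> \bar R) (y u : vec) : Prop :=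
  psi y \is a fin_num /\
  forall x : vec, (psi y + (dotp u (x - y))%:E <= psi x)%E.

(* mu_psi-condition: B_psi(x,y) >= mu/2 |x-y|^2 for all x, y with nonempty
   subdifferential at y and every subgradient at y *)
Definition mu_condition (psi : vec -> \bar R) (mu : R) : Prop :=
  0 <= mu /\
  forall (x y u : vec), subgrad psi y u ->
    (psi y + (dotp u (x - y) + mu / 2 * sqnorm (x - y))%:E <= psi x)%E.

(* inner loop of epoch: starting at x0, apply n incremental gradient steps
   following the permutation sigma; shuffle_pass ... i = x_k^{i+1} *)
Fixpoint shuffle_pass (n : nat) (g : 'I_n -> vec -> vec) (sigma : 'S_n)
    (eta : R) (x0 : vec) (i : nat) : vec :=
  match i with
  | 0 => x0
  | i'.+1 => let z := shuffle_pass g sigma eta x0 i' in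
             if insub i' is Some j then z - eta *: g (sigma j) z else z
  end.

Definition is_prox_point (n : nat) (psi : vec -> \bar R) (eta : R) (w z : vec)
    : Prop :=
  forall z' : vec,
    (n%:R%:E * psi z + (sqnorm (z - w) / (2 * eta))%:E
     <= n%:R%:E * psi z' + (sqnorm (z' - w) / (2 * eta))%:E)%E.

End Defs.

(* Main.v *)
Require Import Defs.
From HB Require Import structures.
From mathcomp Require Import all_boot all_order all_algebra all_fingroup.
From mathcomp Require Import all_classical all_reals all_analysis.
Import Order.TTheory GRing.Theory Num.Theory numFieldNormedType.Exports.
Local Open Scope ring_scope.

From mathcomp Require Import ring lra.

Module M1.
Set Implicit Arguments. Unset Strict Implicit.
Local Open Scope ring_scope.


Section Dot.
Variables (R : realType) (d : nat).
Notation vec := 'rV[R]_d.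
Implicit Types u v w : vec.

Lemma dotpC u v : dotp u v = dotp v u.
Proof. by apply: eq_bigr => i _; rewrite mulrC. Qed.

Lemma dotpDl u v w : dotp (u + v) w = dotp u w + dotp v w.
Proof. by rewrite /dotp -big_split; apply: eq_bigr => i _; rewrite !mxE mulrDl. Qed.

Lemma dotpDr u v w : dotp w (u + v) = dotp w u + dotp w v.
Proof. by rewrite dotpC dotpDl !(dotpC w). Qed.

Lemma dotpZl a u v : dotp (a *: u) v = a * dotp u v.
Proof. by rewrite /dotp mulr_sumr; apply: eq_bigr => i _; rewrite !mxE mulrA. Qed.

Lemma dotpZr a u v : dotp u (a *: v) = a * dotp u v.
Proof. by rewrite dotpC dotpZl dotpC. Qed.

Lemma dotpNl u v : dotp (- u) v = - dotp u v.
Proof. by rewrite -scaleN1r dotpZl mulN1r. Qed.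

Lemma dotpNr u v : dotp u (- v) = - dotp u v.
Proof. by rewrite dotpC dotpNl dotpC. Qed.

Lemma dotpBl u v w : dotp (u - v) w = dotp u w - dotp v w.
Proof. by rewrite dotpDl dotpNl. Qed.

Lemma dotpBr u v w : dotp w (u - v) = dotp w u - dotp w v.
Proof. by rewrite dotpDr dotpNr. Qed.

Lemma dotp0l v : dotp 0 v = 0.
Proof. by rewrite -(scale0r (0:vec)) dotpZl mul0r. Qed.

Lemma dotp0r v : dotp v 0 = 0.
Proof. by rewrite dotpC dotp0l. Qed.

Lemma dotp_suml (I : Type) (r : seq I) (P : pred I) (F : I -> vec) v :
  dotp (\sum_(i <- r | P i) F i) v = \sum_(i <- r | P i) dotp (F i) v.
Proof.
elim/big_rec2: _ => [|i y1 y2 _ <-]; first by rewrite dotp0l.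
by rewrite dotpDl.
Qed.

Lemma dotp_sumr (I : Type) (r : seq I) (P : pred I) (F : I -> vec) v :
  dotp v (\sum_(i <- r | P i) F i) = \sum_(i <- r | P i) dotp v (F i).
Proof. by rewrite dotpC dotp_suml; apply: eq_bigr => i _; rewrite dotpC. Qed.

Lemma dotp_ge0 u : 0 <= dotp u u.
Proof. by apply: sumr_ge0 => i _; rewrite -expr2 sqr_ge0. Qed.

Lemma sqnormE u : sqnorm u = dotp u u.
Proof. by rewrite /sqnorm /enorm sqr_sqrtr // dotp_ge0. Qed.

Lemma sqnorm_ge0 u : 0 <= sqnorm u.
Proof. by rewrite sqnormE dotp_ge0. Qed.

Lemma enorm_ge0 u : 0 <= enorm u.
Proof. exact: sqrtr_ge0. Qed.

Lemma sqnormD u v : sqnorm (u + v) = sqnorm u + 2 * dotp u v + sqnorm v.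
Proof. by rewrite !sqnormE !dotpDl !dotpDr (dotpC v u); lra. Qed.

Lemma sqnormB u v : sqnorm (u - v) = sqnorm u - 2 * dotp u v + sqnorm v.
Proof. by rewrite !sqnormE !dotpDl !dotpDr !dotpNl !dotpNr opprK (dotpC v u); lra. Qed.

Lemma sqnormN u : sqnorm (- u) = sqnorm u.
Proof. by rewrite !sqnormE dotpNl dotpNr opprK. Qed.

Lemma sqnormZ a u : sqnorm (a *: u) = a ^+ 2 * sqnorm u.
Proof. by rewrite !sqnormE dotpZl dotpZr mulrA expr2. Qed.

Lemma sqnormBC u v : sqnorm (u - v) = sqnorm (v - u).
Proof. by rewrite -sqnormN opprB. Qed.

Lemma sqnorm0 : sqnorm (0 : vec) = 0.
Proof. by rewrite sqnormE dotp0l. Qed.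

Lemma dotp_amgm u v (m : R) : 0 < m -> 2 * dotp u v <= m * sqnorm u + sqnorm v / m.
Proof.
move=> m0.
have := sqnorm_ge0 (u - m^-1 *: v).
rewrite sqnormB sqnormZ dotpZr => h.
have e : m * (sqnorm u - 2 * (m^-1 * dotp u v) + m^-1 ^+ 2 * sqnorm v)
   = m * sqnorm u - 2 * dotp u v + sqnorm v / m.
  by field; rewrite gt_eqF.
have : 0 <= m * (sqnorm u - 2 * (m^-1 * dotp u v) + m^-1 ^+ 2 * sqnorm v).
  by rewrite mulr_ge0 // ltW.
rewrite e; lra.
Qed.

Lemma sqnormD_le u v : sqnorm (u + v) <= 2 * sqnorm u + 2 * sqnorm v.
Proof. have := @dotp_amgm u v 1 ltr01; rewrite sqnormD divr1; lra. Qed.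

Lemma sqnormB_le u v : sqnorm (u - v) <= 2 * sqnorm u + 2 * sqnorm v.
Proof. by have := sqnormD_le u (- v); rewrite sqnormN. Qed.

Lemma dotp_le_norm u v : dotp u v <= enorm u * enorm v.
Proof.
have hu := enorm_ge0 u; have hv := enorm_ge0 v.
have su : sqnorm u = enorm u ^+ 2 by [].
have sv : sqnorm v = enorm v ^+ 2 by [].
have [u0|u0] := eqVneq (enorm u) 0.
  have : sqnorm u = 0 by rewrite su u0 expr2 mulr0.
  rewrite sqnormE => /eqP; rewrite psumr_eq0; last by move=> i _; rewrite -expr2 sqr_ge0.
  move=> /allP h.
  rewrite u0 mul0r /dotp big1 // => i _.
  have := h i (mem_index_enum i); rewrite -expr2 sqrf_eq0 => /eqP ->.
  by rewrite mul0r.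
have up : 0 < enorm u by rewrite lt_neqAle eq_sym u0.
have := @dotp_amgm u v (enorm v / enorm u).
have [v0|v0] := eqVneq (enorm v) 0.
  have : sqnorm v = 0 by rewrite sv v0 expr2 mulr0.
  rewrite sqnormE => /eqP; rewrite psumr_eq0; last by move=> i _; rewrite -expr2 sqr_ge0.
  move=> /allP h _.
  rewrite v0 mulr0 /dotp big1 // => i _.
  have := h i (mem_index_enum i); rewrite -expr2 sqrf_eq0 => /eqP ->.
  by rewrite mulr0.
have vp : 0 < enorm v by rewrite lt_neqAle eq_sym v0.
move=> /(_ (divr_gt0 vp up)).
rewrite su sv.
have -> : enorm v / enorm u * enorm u ^+ 2 + enorm v ^+ 2 / (enorm v / enorm u)
    = 2 * (enorm u * enorm v) by field; rewrite ?gt_eqF.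
lra.
Qed.

Lemma enormZ a u : enorm (a *: u) = `|a| * enorm u.
Proof.
rewrite /enorm dotpZl dotpZr mulrA -expr2 sqrtrM ?sqr_ge0 //.
by rewrite sqrtr_sqr.
Qed.

Lemma sqnorm_sum_le (I : Type) (s : seq I) (P : pred I) (c : I -> vec) :
  sqnorm (\sum_(i <- s | P i) c i) <= (size s)%:R * \sum_(i <- s | P i) sqnorm (c i).
Proof.
elim: s => [|a s IH]; first by rewrite !big_nil sqnorm0 mul0r.
rewrite !big_cons /=.
have S0 : 0 <= \sum_(i <- s | P i) sqnorm (c i) by apply: sumr_ge0 => *; exact: sqnorm_ge0.
case: (P a); last first.
  rewrite -natr1 mulrDl mul1r; lra.
set S := \sum_(i <- s | P i) c i.
set Q := \sum_(i <- s | P i) sqnorm (c i).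
rewrite sqnormD -natr1.
have ha := sqnorm_ge0 (c a).
case: (posnP (size s)) => [s0|sp].
  rewrite /S /Q; move/size0nil: s0 => ->; rewrite !big_nil dotp0r sqnorm0 /=.
  lra.
have mp : 0 < (size s)%:R :> R by rewrite ltr0n.
have := @dotp_amgm (c a) S _ mp.
set m := (size s)%:R in mp IH *.
have : sqnorm S / m <= Q by rewrite ler_pdivrMr // mulrC.
move=> h1 h2; rewrite -/S -/Q in IH; rewrite -natr1 -/m; nra.
Qed.

End Dot.

End M1.
Import M1.

Module M2.
Local Open Scope ring_scope.


Section Calc.
Variables (R : realType) (d : nat).
Notation vec := 'rV[R]_d.

Lemma line_derive (f : vec -> R) (g : vec -> vec) (x v : vec) (t : R) :
  is_gradient f g ->
  is_derive t 1 (fun s : R => f (s *: v + x)) (dotp (g (t *: v + x)) v).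
Proof.
move=> hg.
have E : (fun h : R => h^-1 *: (((fun s : R => f (s *: v + x)) \o shift t) (h *: (1:R)) - f (t *: v + x)))
   = (fun h : R => h^-1 *: ((f \o shift (t *: v + x)) (h *: v) - f (t *: v + x))).
  apply/funext => s /=; congr (_ *: (f _ - _)).
  by rewrite /shift /= [s *: 1]mulr1 scalerDl addrA.
have [hd hdv] := hg (t *: v + x).
apply: DeriveDef.
  rewrite /derivable E; exact: diff_derivable.
rewrite /derive E -hdv -deriveE //.
Qed.

Lemma mvt_line (f : vec -> R) (g : vec -> vec) (x y : vec) (k : R) :
  is_gradient f g ->
  exists2 c : R, 0 < c < 1 &
    f y - f x - dotp (g x) (y - x) - k = dotp (g (c *: (y - x) + x) - g x) (y - x) - 2 * k * c.
Proof.
move=> hg.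
set v := y - x; set c0 := dotp (g x) v.
pose p := fun s : R => f (s *: v + x) - c0 * s - k * s ^+ 2.
pose p' := fun s : R => dotp (g (s *: v + x)) v - c0 - 2 * k * s.
have hp : forall t : R, is_derive t 1 p (p' t).
  move=> t.
  have H1 := @line_derive f g x v t hg.
  have H := is_deriveB (is_deriveB H1 (is_deriveZ c0 (is_derive_id t (1:R))))
     (is_deriveZ k (is_deriveX 2 (is_derive_id t (1:R)))).
  have Ep : p = (fun s : R => f (s *: v + x)) - c0 \*: (@id R) - k \*: ((@id R) ^+ 2).
    by apply/funext => s; rewrite /p /= /GRing.scale /= expr2.
  rewrite Ep; apply: is_derive_eq H _.
  rewrite /p' /GRing.scale /= expr1 !mulr1; ring.
have cont := @derivable_within_continuous R R p `[0, 1]%R (fun t _ => (@ex_derive _ _ _ _ _ _ _ (hp t))).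
have [c cin hc] := MVT ltr01 (fun t _ => hp t) cont.
exists c.
  by move: cin; rewrite in_itv.
move: hc; rewrite /p /p' !scale0r !add0r scale1r subr0 mulr0 subr0.
rewrite mulr1 expr1n mulr1 /v subrK expr2 !mulr0 subr0 => hc.
have -> : f y - f x - c0 - k = f y - c0 - k - f x by ring.
rewrite hc mulr1 dotpBl /c0; ring.
Qed.


Lemma enormN (u : vec) : enorm (- u) = enorm u.
Proof. by rewrite -scaleN1r enormZ normrN normr1 mul1r. Qed.

Lemma descent_up (f : vec -> R) (g : vec -> vec) (L : R) (x y : vec) :
  is_gradient f g -> lipschitz_grad g L ->
  f y <= f x + dotp (g x) (y - x) + L / 2 * sqnorm (y - x).
Proof.
move=> hg hl.
have [c /andP[c0 c1] hc] := mvt_line _ _ x y (L / 2 * sqnorm (y - x)) hg.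
have h1 := dotp_le_norm (g (c *: (y - x) + x) - g x) (y - x).
have h2 := hl (c *: (y - x) + x) x.
rewrite addrK enormZ gtr0_norm // in h2.
have hn := enorm_ge0 (y - x).
have : dotp (g (c *: (y - x) + x) - g x) (y - x) <= L * c * sqnorm (y - x).
  apply: (le_trans h1); rewrite /sqnorm expr2 mulrA.
  by apply: ler_wpM2r => //; rewrite -mulrA.
lra.
Qed.

Lemma descent_low (f : vec -> R) (g : vec -> vec) (L : R) (x y : vec) :
  is_gradient f g -> lipschitz_grad g L ->
  f x + dotp (g x) (y - x) - L / 2 * sqnorm (y - x) <= f y.
Proof.
move=> hg hl.
have [c /andP[c0 c1] hc] := mvt_line _ _ x y (- (L / 2 * sqnorm (y - x))) hg.
have h1 := dotp_le_norm (- (g (c *: (y - x) + x) - g x)) (y - x).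
rewrite enormN dotpNl in h1.
have h2 := hl (c *: (y - x) + x) x.
rewrite addrK enormZ gtr0_norm // in h2.
have hn := enorm_ge0 (y - x).
have : - dotp (g (c *: (y - x) + x) - g x) (y - x) <= L * c * sqnorm (y - x).
  apply: (le_trans h1); rewrite /sqnorm expr2 mulrA.
  by apply: ler_wpM2r => //; rewrite -mulrA.
lra.
Qed.

Lemma small_t (a b c : R) :
  (forall t : R, 0 < t < 1 -> a <= b + t * c) -> a <= b.
Proof.
move=> h; apply/ler_addgt0Pr => e e0.
have [c0|c0] := leP c 0.
  have := h (2^-1); rewrite invr_gt0 invf_lt1 ?ltr1n // ltr0n => /(_ isT).
  move=> h2; have : 2^-1 * c <= 0 by rewrite pmulr_rle0 // invr_gt0 ltr0n.
  lra.
have ec : 0 < e + c by rewrite addr_gt0.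
have := h (e / (e + c)).
rewrite divr_gt0 //= ltr_pdivrMr // mul1r ltrDl c0 => /(_ isT) h2.
suff : e / (e + c) * c <= e by lra.
rewrite mulrAC ler_pdivrMr // ler_pM2l //; lra.
Qed.

Lemma first_order (f : vec -> R) (g : vec -> vec) (L : R) (x y : vec) :
  convex_fun f -> is_gradient f g -> lipschitz_grad g L ->
  f x + dotp (g x) (y - x) <= f y.
Proof.
move=> hc hg hl.
apply: (@small_t _ _ (L / 2 * sqnorm (y - x))) => t /andP[t0 t1].
have hconv := hc y x t; rewrite ltW // ltW // in hconv.
have e : t *: y + (1 - t) *: x = x + t *: (y - x).
  by rewrite scalerBl scale1r scalerBr addrCA.
rewrite e in hconv.
have hd := descent_low _ _ _ x (x + t *: (y - x)) hg hl.
have ex : x + t *: (y - x) - x = t *: (y - x) by rewrite addrC addKr.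
rewrite ex dotpZr sqnormZ in hd.
have hcv := hconv isT.
have : t * (f x + dotp (g x) (y - x)) <= t * (f y + t * (L / 2 * sqnorm (y - x))).
  nra.
by rewrite ler_pM2l.
Qed.

Lemma cocoercive (f : vec -> R) (g : vec -> vec) (L : R) (x y : vec) :
  convex_fun f -> is_gradient f g -> lipschitz_grad g L -> 0 < L ->
  f x + dotp (g x) (y - x) + sqnorm (g y - g x) / (2 * L) <= f y.
Proof.
move=> hc hg hl L0.
set D := g y - g x.
set z := y - L^-1 *: D.
have h1 := first_order _ _ _ x z hc hg hl.
have h2 := descent_up _ _ _ y z hg hl.
have ezx : z - x = (y - x) - L^-1 *: D by rewrite /z addrAC.
have ezy : z - y = - (L^-1 *: D) by rewrite /z addrAC subrr add0r.
rewrite ezx dotpBr dotpZr in h1.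
rewrite ezy dotpNr dotpZr sqnormN sqnormZ in h2.
have rel : sqnorm D = dotp (g y) D - dotp (g x) D by rewrite sqnormE {1}/D dotpBl.
set li := L^-1 in h1 h2.
have e1 : L / 2 * (li ^+ 2 * sqnorm D) = li * sqnorm D / 2.
  by rewrite /li; field; rewrite gt_eqF.
have e2 : sqnorm D / (2 * L) = li * sqnorm D / 2.
  by rewrite /li; field; rewrite gt_eqF.
have e3 : li * sqnorm D = li * dotp (g y) D - li * dotp (g x) D by rewrite rel mulrBr.
rewrite e1 in h2; rewrite e2.
lra.
Qed.

End Calc.

End M2.
Import M2.

Module M3.
Local Open Scope ring_scope.


Section Psi.
Variables (R : realType) (d : nat).
Notation vec := 'rV[R]_d.

Lemma subgrad_gen (psi : vec -> \bar R) (y u : vec) (C : vec -> R) :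
  convex_efun psi -> never_minfty psi -> psi y \is a fin_num ->
  (forall z t, 0 < t < 1 ->
     ((fine (psi y) + t * dotp u (z - y) - t ^+ 2 * C z)%:E
        <= psi (t *: z + (1 - t) *: y)%R)%E) ->
  subgrad psi y u.
Proof.
move=> hc hm hy H; split => // z.
rewrite -(fineK hy) -EFinD.
case hz: (psi z) => [r| |]; last 2 first.
- exact: leey.
- by have := hm z; rewrite hz.
rewrite lee_fin.
apply: (@small_t _ _ _ (C z)) => t /andP[t0 t1].
have h1 := H z t; rewrite t0 t1 /= in h1.
have h2 := hc z y t; rewrite t0 t1 /= in h2.
have h3 := le_trans (h1 isT) (h2 isT).
rewrite hz -(fineK hy) -!EFinM -EFinD lee_fin in h3.
set p := fine (psi y) in h3 *.
change (fine p%:E) with p in h3.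
have : t * (p + dotp u (z - y)) <= t * (r + t * C z).
  rewrite expr2 in h3; rewrite !mulrDr mulrA; lra.
by rewrite ler_pM2l.
Qed.

Lemma prox_subgrad (n : nat) (psi : vec -> \bar R) (eta : R) (w xp : vec) :
  (0 < n)%N -> 0 < eta -> proper_fun psi -> convex_efun psi ->
  is_prox_point n psi eta w xp ->
  psi xp \is a fin_num /\ subgrad psi xp ((n%:R * eta)^-1 *: (w - xp)).
Proof.
move=> hn he [hm [z0 hz0]] hc hp.
have n0 : 0 < n%:R :> R by rewrite ltr0n.
have hfin : psi xp \is a fin_num.
  have := hp z0; rewrite -(fineK hz0) -EFinM -EFinD.
  case E: (psi xp) => [r| |] //.
    by rewrite mulry gtr0_sg // mul1e addye.
  by have := hm xp; rewrite E.
split => //.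
apply: (@subgrad_gen _ _ _ (fun z => sqnorm (z - xp) / (2 * n%:R * eta))) => // z t /andP[t0 t1].
set zt := t *: z + (1 - t) *: xp.
have := hp zt.
rewrite -(fineK hfin) -EFinM -EFinD.
case E: (psi zt) => [q| |]; last 2 first.
- by move=> _; exact: leey.
- by have := hm zt; rewrite E.
rewrite -EFinM -EFinD !lee_fin => h.
set p := fine (psi xp) in h *.
have ez : zt - w = (xp - w) + t *: (z - xp).
  rewrite /zt scalerBl scale1r scalerBr.
  by rewrite addrCA addrAC.
rewrite ez (sqnormD (xp - w)) dotpZr sqnormZ in h.
change (fine p%:E) with p.
rewrite dotpZl.
have hw : dotp (w - xp) (z - xp) = - dotp (xp - w) (z - xp) by rewrite -dotpNl opprB.
rewrite hw.
set X := dotp (xp - w) (z - xp) in h *.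
set S := sqnorm (z - xp) in h *.
set A := sqnorm (xp - w) in h *.
have e1 : n%:R * (p + t * ((n%:R * eta)^-1 * - X) - t ^+ 2 * (S / (2 * n%:R * eta)))
   = n%:R * p - (2 * t * X + t ^+ 2 * S) / (2 * eta).
  by field; rewrite !gt_eqF.
have e2 : (A + 2 * (t * X) + t ^+ 2 * S) / (2 * eta) = A / (2 * eta) + (2 * t * X + t ^+ 2 * S) / (2 * eta).
  by field; rewrite gt_eqF.
rewrite e2 in h.
rewrite -(ler_pM2l n0) e1.
lra.
Qed.

End Psi.

End M3.
Import M3.

Module M4.
Local Open Scope ring_scope.


Section Opt.
Variables (R : realType) (d : nat).
Notation vec := 'rV[R]_d.

Lemma sum_descent (n : nat) (f : 'I_n -> vec -> R) (g : 'I_n -> vec -> vec) (L : 'I_n -> R) (x y : vec) :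
  (forall i, is_gradient (f i) (g i)) -> (forall i, lipschitz_grad (g i) (L i)) ->
  n%:R^-1 * \sum_(i < n) f i y <=
    n%:R^-1 * \sum_(i < n) f i x + dotp (n%:R^-1 *: \sum_(i < n) g i x) (y - x)
    + (n%:R^-1 * \sum_(i < n) L i) / 2 * sqnorm (y - x).
Proof.
move=> hg hl.
have h : \sum_(i < n) f i y <= \sum_(i < n) (f i x + dotp (g i x) (y - x) + L i / 2 * sqnorm (y - x)).
  by apply: ler_sum => i _; apply: descent_up.
rewrite big_split big_split /= in h.
have e1 : \sum_(i < n) dotp (g i x) (y - x) = dotp (\sum_(i < n) g i x) (y - x) by rewrite dotp_suml.
have e2 : \sum_(i < n) (L i / 2 * sqnorm (y - x)) = (\sum_(i < n) L i) / 2 * sqnorm (y - x).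
  by rewrite -!mulr_suml.
rewrite e1 e2 in h.
have hn : 0 <= n%:R^-1 :> R by rewrite invr_ge0 ler0n.
have := ler_wpM2l hn h.
rewrite dotpZl; set ni := n%:R^-1.
rewrite !mulrDr; lra.
Qed.

Lemma opt_subgrad (n : nat) (f : 'I_n -> vec -> R) (g : 'I_n -> vec -> vec) (L : 'I_n -> R)
  (psi : vec -> \bar R) (xstar : vec) :
  (forall i, is_gradient (f i) (g i)) -> (forall i, lipschitz_grad (g i) (L i)) ->
  never_minfty psi -> convex_efun psi ->
  ((n%:R^-1 * \sum_(i < n) f i xstar)%:E + psi xstar)%E \is a fin_num ->
  (forall y : vec,
     ((n%:R^-1 * \sum_(i < n) f i xstar)%:E + psi xstar
       <= (n%:R^-1 * \sum_(i < n) f i y)%:E + psi y)%E) ->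
  psi xstar \is a fin_num /\ subgrad psi xstar (- (n%:R^-1 *: \sum_(i < n) g i xstar)).
Proof.
move=> hg hl hm hc hfin hmin.
have hpx : psi xstar \is a fin_num by move: hfin; rewrite fin_numD => /andP[].
split => //.
apply: (@subgrad_gen _ _ _ _ _ (fun z => (n%:R^-1 * \sum_(i < n) L i) / 2 * sqnorm (z - xstar))) => // z t /andP[t0 t1].
set zt := (t *: z + (1 - t) *: xstar).
have := hmin zt.
rewrite -(fineK hpx) -EFinD.
case E: (psi zt) => [q| |]; last 2 first.
- by move=> _; exact: leey.
- by have := hm zt; rewrite E.
rewrite -EFinD lee_fin => h.
have hd := @sum_descent n f g L xstar zt hg hl.
have ez : zt - xstar = t *: (z - xstar).
  by rewrite /zt scalerBl scale1r scalerBr addrCA addrAC subrr add0r.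
rewrite ez dotpZr sqnormZ in hd.
rewrite dotpNl.
set p := fine (psi xstar) in h *.
change (fine p%:E) with p.
clear hfin hmin E hpx hc hm hg hl.
rewrite lee_fin; lra.
Qed.

Lemma shuffle_formula (n : nat) (g : 'I_n -> vec -> vec) (sig : 'S_n) (eta : R) (x0 : vec) (i : nat) :
  (i <= n)%N ->
  shuffle_pass g sig eta x0 i =
    x0 - eta *: \sum_(j < n | (j < i)%N) g (sig j) (shuffle_pass g sig eta x0 j).
Proof.
elim: i => [_|i IH hi].
  by rewrite big_pred0 // scaler0 subr0.
rewrite /= insubT /=.
set z := shuffle_pass g sig eta x0 i.
rewrite [in RHS](bigD1 (Sub i hi)) //=.
have -> : \sum_(j < n | (j < i.+1)%N && (j != Sub i hi)) g (sig j) (shuffle_pass g sig eta x0 j)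
   = \sum_(j < n | (j < i)%N) g (sig j) (shuffle_pass g sig eta x0 j).
  apply: eq_bigl => j.
  by rewrite ltnS leq_eqVlt -val_eqE /=; case: ltngtP.
have hz := IH (ltnW hi); rewrite -/z in hz.
rewrite {1}hz scalerDr opprD addrAC addrA.
done.
Qed.

End Opt.

End M4.
Import M4.

Module M5.
Local Open Scope ring_scope.


Section Epoch.
Variables (R : realType) (d : nat).
Notation vec := 'rV[R]_d.

Lemma size_index_enum_ord n : size (index_enum 'I_n) = n.
Proof. by rewrite /index_enum -enumT size_enum_ord. Qed.

Lemma sqnorm_sum_ord n (P : pred 'I_n) (c : 'I_n -> vec) :
  sqnorm (\sum_(i < n | P i) c i) <= n%:R * \sum_(i < n | P i) sqnorm (c i).
Proof. by have := sqnorm_sum_le (index_enum 'I_n) P c; rewrite size_index_enum_ord. Qed.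

Lemma sum_sub_le n (P : pred 'I_n) (F : 'I_n -> R) :
  (forall i, 0 <= F i) -> \sum_(i < n | P i) F i <= \sum_(i < n) F i.
Proof.
move=> h; rewrite [X in _ <= X](bigID P) /= lerDl.
by apply: sumr_ge0 => i _.
Qed.

Lemma step_facts n (L : 'I_n -> R) (eta : R) :
  (0 < n)%N -> (forall i, 0 < L i) -> 0 < eta ->
  eta <= (2 * n%:R * Num.sqrt ((n%:R^-1 * \sum_(i < n) L i)
                                     * \big[Num.max/0]_(i < n) L i))^-1 ->
  (forall l, 4 * eta ^+ 2 * n%:R * (\sum_(i < n) L i) * L l <= 1) /\
  2 * eta * (\sum_(i < n) L i) <= 1.
Proof.
move=> hn hL he hle.
set Ls := \sum_(i < n) L i.
set M := \big[Num.max/0]_(i < n) L i.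
have N0 : 0 < n%:R :> R by rewrite ltr0n.
have LM : forall l, L l <= M by move=> l; apply: (le_bigmax (T := R)).
have Lsp : 0 < Ls.
  rewrite /Ls (bigD1 (Ordinal hn)) //= ltr_pwDl //.
  by apply: sumr_ge0 => i _; exact: ltW.
have Mp : 0 < M by apply: lt_le_trans (hL (Ordinal hn)) (LM _).
have LsM : Ls <= n%:R * M.
  have : Ls <= \sum_(i < n) M by apply: ler_sum => i _; exact: LM.
  by rewrite sumr_const card_ord mulr_natl.
set s := Num.sqrt (n%:R^-1 * Ls * M).
have sp : 0 < s by rewrite sqrtr_gt0 mulr_gt0 // mulr_gt0 // invr_gt0.
have s2 : s ^+ 2 = n%:R^-1 * Ls * M by rewrite sqr_sqrtr // ltW // mulr_gt0 // mulr_gt0 // invr_gt0.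
have h1 : eta * (2 * n%:R * s) <= 1.
  by rewrite -ler_pdivlMr ?mulr_gt0 // div1r.
have h2 : eta ^+ 2 * (4 * n%:R ^+ 2 * s ^+ 2) <= 1.
  have : (eta * (2 * n%:R * s)) ^+ 2 <= 1.
    have a0 : 0 <= eta * (2 * n%:R * s) by rewrite !mulr_ge0 // ltW.
    set a := eta * (2 * n%:R * s) in h1 a0 *; nra.
  congr (_ <= _); ring.
rewrite s2 in h2.
have h3 : 4 * eta ^+ 2 * n%:R * Ls * M <= 1.
  have e : 4 * eta ^+ 2 * n%:R * Ls * M = eta ^+ 2 * (4 * n%:R ^+ 2 * (n%:R^-1 * Ls * M)).
    by field; rewrite gt_eqF.
  by rewrite e.
have e2 : 0 <= 4 * eta ^+ 2 * n%:R * Ls by rewrite !mulr_ge0 // ?ltW // sqr_ge0.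
split.
  move=> l; apply: le_trans h3; exact: ler_wpM2l (LM l).
have : (2 * eta * Ls) ^+ 2 <= 1.
  apply: le_trans h3.
  have -> : (2 * eta * Ls) ^+ 2 = 4 * eta ^+ 2 * Ls * Ls by ring.
  have : 4 * eta ^+ 2 * Ls * Ls <= 4 * eta ^+ 2 * Ls * (n%:R * M).
    by apply: ler_wpM2l => //; rewrite !mulr_ge0 // ?ltW // sqr_ge0.
  have -> : 4 * eta ^+ 2 * n%:R * Ls * M = 4 * eta ^+ 2 * Ls * (n%:R * M) by ring.
  by [].
move=> h; have : 0 <= 2 * eta * Ls by rewrite !mulr_ge0 // ltW.
nra.
Qed.

End Epoch.

End M5.
Import M5.

Module M6.
Local Open Scope ring_scope.


Section Epoch2.
Variables (R : realType) (d : nat).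
Notation vec := 'rV[R]_d.

Lemma epoch (n : nat) (hn : (0 < n)%N)
  (f : 'I_n -> vec -> R) (g : 'I_n -> vec -> vec)
  (psi : vec -> \bar R) (L : 'I_n -> R) (mu_f mu_psi : R) (xstar : vec)
  (hfconv : forall i, convex_fun (f i))
  (hgrad : forall i, is_gradient (f i) (g i))
  (hL : forall i, 0 < L i)
  (hsmooth : forall i, lipschitz_grad (g i) (L i))
  (hBf : forall y z : vec,
     mu_f / 2 * sqnorm (y - z) <=
       n%:R^-1 * (\sum_(i < n) f i y) - n%:R^-1 * (\sum_(i < n) f i z)
       - dotp (n%:R^-1 *: \sum_(i < n) g i z) (y - z))
  (hpsi_proper : proper_fun psi)
  (hpsi_conv : convex_efun psi)
  (hmupsi : mu_condition psi mu_psi)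
  (hxstar_fin : ((n%:R^-1 * \sum_(i < n) f i xstar)%:E + psi xstar)%E
                  \is a fin_num)
  (hxstar_min : forall y : vec,
     ((n%:R^-1 * \sum_(i < n) f i xstar)%:E + psi xstar
       <= (n%:R^-1 * \sum_(i < n) f i y)%:E + psi y)%E)
  (eta : R) (sig : 'S_n) (xk xp : vec)
  (eta0 : 0 < eta)
  (hle : eta <= (2 * n%:R * Num.sqrt ((n%:R^-1 * \sum_(i < n) L i)
                                     * \big[Num.max/0]_(i < n) L i))^-1)
  (hprox : is_prox_point n psi eta (shuffle_pass g sig eta xk n) xp) :
  (1 + n%:R * eta * (mu_f + 2 * mu_psi)) * sqnorm (xp - xstar) <=
   sqnorm (xk - xstar) + 8 * n%:R * eta ^+ 3 *
     (\sum_(i < n | (0 < i)%N)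
                 (L (sig i) / n%:R
                  * sqnorm (\sum_(j < n | (j < i)%N) g (sig j) xstar))).
Proof.
have N0 : 0 < n%:R :> R by rewrite ltr0n.
set w := shuffle_pass g sig eta xk n.
pose X (j : 'I_n) := shuffle_pass g sig eta xk j.
pose a (j : 'I_n) := g (sig j) (X j).
pose b (j : 'I_n) := g (sig j) xstar.
pose S (j : 'I_n) := \sum_(l < n | (l < j)%N) a l.
pose T (j : 'I_n) := \sum_(l < n | (l < j)%N) b l.
have hm := hpsi_proper.1.
have [pfin hsub] := @prox_subgrad R d n psi eta w xp hn eta0 hpsi_proper hpsi_conv hprox.
set u := (n%:R * eta)^-1 *: (w - xp) in hsub.
have [hsx hsubx] := @opt_subgrad R d n f g L psi xstar hgrad hsmooth hm hpsi_conv hxstar_fin hxstar_min.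
have F3 := hmupsi.2 xstar xp u hsub.
have F4 := hmupsi.2 xp xstar _ hsubx.
rewrite -(fineK pfin) -(fineK hsx) -EFinD lee_fin in F3.
rewrite -(fineK pfin) -(fineK hsx) -EFinD lee_fin in F4.
set pp := fine (psi xp) in F3 F4.
set ps := fine (psi xstar) in F3 F4.
have F5 := hBf xp xstar.
have Xf : forall j : 'I_n, X j = xk - eta *: S j.
  by move=> j; rewrite /X shuffle_formula // ltnW.
have wf : w = xk - eta *: \sum_(l < n) a l.
  rewrite /w shuffle_formula //; congr (_ - _ *: _).
  by apply: eq_bigl => l; rewrite ltn_ord.
have nz : n%:R * eta != 0 by rewrite mulf_neq0 // gt_eqF.
set D := xk - xp.
have eD : D = eta *: \sum_(l < n) a l + (n%:R * eta) *: u.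
  rewrite /u scalerA mulfV // scale1r /D wf.
  by apply/matrixP => i j; rewrite !mxE; ring.
set E := sqnorm (xp - xstar).
have e0 : sqnorm (xk - xstar) = sqnorm D + 2 * dotp D (xp - xstar) + E.
  have -> : xk - xstar = D + (xp - xstar) by rewrite /D; apply/matrixP => i j; rewrite !mxE; ring.
  by rewrite sqnormD.
have eDd : dotp D (xp - xstar) = eta * \sum_(j < n) dotp (a j) (xp - xstar) + n%:R * eta * dotp u (xp - xstar).
  by rewrite eD dotpDl !dotpZl dotp_suml.
have F1 : forall j : 'I_n, f (sig j) xp - f (sig j) xstar - (L (sig j) * sqnorm (xp - X j)) / 2
      + (sqnorm (b j - a j) / L (sig j)) / 2 <= dotp (a j) (xp - xstar).
  move=> j.
  have h1 := @descent_up _ _ _ _ _ (X j) xp (hgrad (sig j)) (hsmooth (sig j)).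
  have h2 := @cocoercive _ _ _ _ _ (X j) xstar (hfconv (sig j)) (hgrad (sig j)) (hsmooth (sig j)) (hL (sig j)).
  have e : xp - xstar = (xp - X j) - (xstar - X j) by apply/matrixP => i k; rewrite !mxE; ring.
  rewrite e dotpBr.
  rewrite -/(a j) -/(b j) in h1 h2.
  have e3 : sqnorm (b j - a j) / L (sig j) / 2 = sqnorm (b j - a j) / (2 * L (sig j)).
    by field; rewrite gt_eqF.
  rewrite e3; lra.
have I1 : \sum_(j < n) f (sig j) xp - \sum_(j < n) f (sig j) xstar
      - (\sum_(j < n) L (sig j) * sqnorm (xp - X j)) / 2
      + (\sum_(j < n) sqnorm (b j - a j) / L (sig j)) / 2 <= \sum_(j < n) dotp (a j) (xp - xstar).
  rewrite !mulr_suml -!sumrB -big_split /=; apply: ler_sum => j _; exact: F1.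
have reidx : forall (F : 'I_n -> R), \sum_(j < n) F (sig j) = \sum_(i < n) F i.
  by move=> F; rewrite [RHS](reindex_inj (@perm_inj _ sig)).
rewrite (reidx (fun i => f i xp)) (reidx (fun i => f i xstar)) in I1.
set Cn := \sum_(l < n) sqnorm (a l - b l).
have Cn0 : 0 <= Cn by apply: sumr_ge0 => l _; exact: sqnorm_ge0.
have Pj : forall j : 'I_n, L (sig j) * sqnorm (xp - X j) <=
    2 * sqnorm D * L (sig j) + 4 * eta ^+ 2 * (L (sig j) * sqnorm (T j))
    + 4 * eta ^+ 2 * n%:R * Cn * L (sig j).
  move=> j.
  have ex : xp - X j = eta *: S j - D by rewrite Xf /D; apply/matrixP => i k; rewrite !mxE; ring.
  have h := sqnormB_le (eta *: S j) D.
  rewrite sqnormZ -ex in h.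
  have eST : S j = T j + \sum_(l < n | (l < j)%N) (a l - b l).
    by rewrite sumrB /S /T addrC subrK.
  have hS := sqnormD_le (T j) (\sum_(l < n | (l < j)%N) (a l - b l)).
  rewrite -eST in hS.
  have hC := @sqnorm_sum_ord R d n (fun l : 'I_n => (l < j)%N) (fun l => a l - b l).
  have hC2 : \sum_(l < n | (l < j)%N) sqnorm (a l - b l) <= Cn.
    by apply: sum_sub_le => l; exact: sqnorm_ge0.
  have hC3 : n%:R * \sum_(l < n | (l < j)%N) sqnorm (a l - b l) <= n%:R * Cn.
    by apply: ler_wpM2l => //; exact: ltW.
  have e2 : 0 <= eta ^+ 2 by exact: sqr_ge0.
  have q1 : sqnorm (xp - X j) <= 2 * sqnorm D + 4 * eta ^+ 2 * sqnorm (T j) + 4 * eta ^+ 2 * (n%:R * Cn).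
    have := ler_wpM2l e2 hS.
    have := ler_wpM2l e2 (le_trans hC hC3).
    rewrite !mulrDr; lra.
  have := ler_wpM2l (ltW (hL (sig j))) q1.
  rewrite !mulrDr; lra.
have Qsum : \sum_(j < n) L (sig j) * sqnorm (xp - X j) <=
    \sum_(j < n) (2 * sqnorm D * L (sig j) + 4 * eta ^+ 2 * (L (sig j) * sqnorm (T j))
    + 4 * eta ^+ 2 * n%:R * Cn * L (sig j)).
  by apply: ler_sum => j _; exact: Pj.
rewrite big_split big_split /= in Qsum.
rewrite -!mulr_sumr (reidx L) in Qsum.
set Ls := \sum_(i < n) L i in Qsum.
have [G1 G2] := @step_facts R n L eta hn hL eta0 hle.
rewrite -/Ls in G1 G2.
set Cp := \sum_(j < n) sqnorm (b j - a j) / L (sig j).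
have CnB : 4 * eta ^+ 3 * n%:R * Ls * Cn <= eta * Cp.
  rewrite [_ * Cn]mulr_sumr [eta * Cp]mulr_sumr; apply: ler_sum => l _.
  have hl := G1 (sig l).
  have Lp := hL (sig l).
  have q0 : 0 <= eta * (sqnorm (b l - a l) / L (sig l)).
    by apply: mulr_ge0; [exact: ltW | apply: divr_ge0; [exact: sqnorm_ge0 | exact: ltW]].
  have := ler_wpM2r q0 hl.
  rewrite mul1r.
  have -> : 4 * eta ^+ 2 * n%:R * Ls * L (sig l) * (eta * (sqnorm (b l - a l) / L (sig l)))
      = 4 * eta ^+ 3 * n%:R * Ls * sqnorm (b l - a l) by field; rewrite gt_eqF.
  by rewrite (sqnormBC (a l)).
set Rs := \sum_(i < n | (0 < i)%N) (L (sig i) / n%:R * sqnorm (\sum_(j < n | (j < i)%N) g (sig j) xstar)).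
have TR : \sum_(j < n) L (sig j) * sqnorm (T j) = n%:R * Rs.
  rewrite /Rs [in RHS]big_mkcond /= [in RHS]mulr_sumr; apply: eq_bigr => j _.
  case: (posnP j) => [j0|jp].
    by rewrite mulr0 /T big_pred0 ?sqnorm0 ?mulr0 // => l; rewrite j0.
  by rewrite /T; field; rewrite gt_eqF.
have Rs0 : 0 <= Rs.
  apply: sumr_ge0 => i _; apply: mulr_ge0; last exact: sqnorm_ge0.
  by apply: divr_ge0; [exact: ltW | exact: ltW].
rewrite TR in Qsum.
have eu : dotp u (xstar - xp) = - dotp u (xp - xstar) by rewrite -dotpNr opprB.
rewrite eu (sqnormBC xstar) -/E in F3.
rewrite dotpNl -/E in F4.
set G := dotp (n%:R^-1 *: \sum_(i < n) g i xstar) (xp - xstar) in F4 F5.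
rewrite -/E in F5.
have F5' : n%:R * (mu_f / 2 * E) <= \sum_(i < n) f i xp - \sum_(i < n) f i xstar - n%:R * G.
  have := ler_wpM2l (ltW N0) F5.
  by rewrite !mulrBr !mulrA mulfV ?gt_eqF // !mul1r.
set I1s := \sum_(j < n) dotp (a j) (xp - xstar) in I1 eDd.
set Qp := \sum_(j < n) L (sig j) * sqnorm (xp - X j) in I1 Qsum.
set Iu := dotp u (xp - xstar) in F3 eDd.
set Fp := \sum_(i < n) f i xp in I1 F5'.
set Fs := \sum_(i < n) f i xstar in I1 F5'.
set DD := sqnorm D in e0 Qsum.
have DD0 : 0 <= DD by exact: sqnorm_ge0.
have E0 : 0 <= E by exact: sqnorm_ge0.
have he := ltW eta0.
have hne : 0 <= n%:R * eta by rewrite mulr_ge0 // ltW.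
have A1 := ler_wpM2l he I1.
have A2 := ler_wpM2l hne F3.
have A3 := ler_wpM2l hne F4.
have A4 := ler_wpM2l he F5'.
have A5 := ler_wpM2l he Qsum.
have A6 : 2 * eta * Ls * DD <= DD.
  have := ler_wpM2r DD0 G2; by rewrite mul1r.
have A7 : 0 <= n%:R * eta ^+ 3 * Rs by rewrite !mulr_ge0 // ?ltW // exprn_ge0 // ltW.
rewrite e0 eDd.
rewrite ?mulrDr ?mulrBr in A1 A2 A3 A4 A5.
rewrite -/Cp in A1.
lra.
Qed.




End Epoch2.

End M6.
Import M6.



Lemma unroll (R : realType) (K : nat) (a q c : nat -> R) :
  (forall k, (1 <= k <= K)%N -> 0 < q k) ->
  (forall k, (1 <= k <= K)%N -> q k * a k.+1 <= a k + c k) ->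
  forall k, (1 <= k <= K)%N ->
    a k.+1 <= a 1%N / (\prod_(1 <= s < k.+1) q s)
      + \sum_(1 <= l < k.+1) (c l / (\prod_(l <= s < k.+1) q s)).
Proof.
move=> hq hr; elim => [|k IH] // /andP[hk1 hkK].
have hk' : (1 <= k.+1 <= K)%N by rewrite hk1 hkK.
have q0 := hq k.+1 hk'.
have h := hr k.+1 hk'.
case: (posnP k) => [k0|kp].
  rewrite k0 in q0 h *.
  rewrite big_nat1 big_nat1 big_nat1.
  by rewrite -mulrDl ler_pdivlMr // mulrC.
have IH' := IH (introT andP (conj kp (ltnW hkK))).
rewrite [\prod_(1 <= s < k.+2) q s]big_nat_recr //=.
rewrite [\sum_(1 <= l < k.+2) _]big_nat_recr //= big_nat1.
have -> : \sum_(1 <= l < k.+1) (c l / \prod_(l <= s < k.+2) q s)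
        = (\sum_(1 <= l < k.+1) (c l / \prod_(l <= s < k.+1) q s)) / q k.+1.
  rewrite mulr_suml; apply: eq_big_nat => l /andP[l1 lk].
  by rewrite big_nat_recr 1?ltnW //= invfM mulrA.
rewrite invfM mulrA -!mulrDl ler_pdivlMr // mulrC.
apply: le_trans h _; lra.
Qed.

Theorem mainTheorem10 (R : realType) (n d : nat) (hn : (0 < n)%N)
  (f : 'I_n -> 'rV[R]_d -> R) (g : 'I_n -> 'rV[R]_d -> 'rV[R]_d)
  (psi : 'rV[R]_d -> \bar R)
  (L : 'I_n -> R) (mu_f mu_psi : R)
  (xstar : 'rV[R]_d) (K : nat) (eta : nat -> R) (sigma : nat -> 'S_n)
  (x : nat -> 'rV[R]_d)
  (hfconv : forall i, convex_fun (f i))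
  (hgrad : forall i, is_gradient (f i) (g i))
  (hL : forall i, 0 < L i)
  (hsmooth : forall i, lipschitz_grad (g i) (L i))
  (hmuf : 0 <= mu_f)
  (hBf : forall y z : 'rV[R]_d,
     mu_f / 2 * sqnorm (y - z) <=
       n%:R^-1 * (\sum_(i < n) f i y) - n%:R^-1 * (\sum_(i < n) f i z)
       - dotp (n%:R^-1 *: \sum_(i < n) g i z) (y - z))
  (hpsi_proper : proper_fun psi) (hpsi_closed : closed_fun psi)
  (hpsi_conv : convex_efun psi)
  (hmupsi : mu_condition psi mu_psi)
  (hxstar_fin : ((n%:R^-1 * \sum_(i < n) f i xstar)%:E + psi xstar)%E
                  \is a fin_num)
  (hxstar_min : forall y : 'rV[R]_d,
     ((n%:R^-1 * \sum_(i < n) f i xstar)%:E + psi xstar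
       <= (n%:R^-1 * \sum_(i < n) f i y)%:E + psi y)%E)
  (hK : (2 <= K)%N)
  (heta_pos : forall k, (1 <= k <= K)%N -> 0 < eta k)
  (heta_le : forall k, (1 <= k <= K)%N ->
     eta k <= (2 * n%:R * Num.sqrt ((n%:R^-1 * \sum_(i < n) L i)
                                     * \big[Num.max/0]_(i < n) L i))^-1)
  (hx1 : (psi (x 1%N) < +oo)%E)
  (hx : forall k, (1 <= k <= K)%N ->
     is_prox_point n psi (eta k)
       (shuffle_pass g (sigma k) (eta k) (x k) n) (x k.+1)) :
  forall k, (1 <= k <= K)%N ->
    sqnorm (x k.+1 - xstar) <=
      sqnorm (xstar - x 1%N)
        / (\prod_(1 <= s < k.+1) (1 + n%:R * eta s * (mu_f + 2 * mu_psi)))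
      + \sum_(1 <= l < k.+1)
          (8 * n%:R * eta l ^+ 3
            * (\sum_(i < n | (0 < i)%N)
                 (L (sigma l i) / n%:R
                  * sqnorm (\sum_(j < n | (j < i)%N) g (sigma l j) xstar)))
           / (\prod_(l <= s < k.+1) (1 + n%:R * eta s * (mu_f + 2 * mu_psi)))).
Proof.
move=> k hk.
have hmup := hmupsi.1.
pose q := fun s => 1 + n%:R * eta s * (mu_f + 2 * mu_psi).
pose c := fun l => 8 * n%:R * eta l ^+ 3
            * (\sum_(i < n | (0 < i)%N)
                 (L (sigma l i) / n%:R
                  * sqnorm (\sum_(j < n | (j < i)%N) g (sigma l j) xstar))).
have hq : forall s, (1 <= s <= K)%N -> 0 < q s.
  move=> s hs.
  have h1 : 0 <= n%:R * eta s by rewrite mulr_ge0 // ltW // heta_pos.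
  have h2 : 0 <= mu_f + 2 * mu_psi by rewrite addr_ge0 // mulr_ge0.
  have := mulr_ge0 h1 h2; rewrite /q; lra.
have hr : forall s, (1 <= s <= K)%N ->
   q s * sqnorm (x s.+1 - xstar) <= sqnorm (x s - xstar) + c s.
  move=> s hs.
  exact: (@epoch R d n hn f g psi L mu_f mu_psi xstar hfconv hgrad hL hsmooth hBf
            hpsi_proper hpsi_conv hmupsi hxstar_fin hxstar_min (eta s) (sigma s) (x s) (x s.+1)
            (heta_pos s hs) (heta_le s hs) (hx s hs)).
have := @unroll R K (fun s => sqnorm (x s - xstar)) q c hq hr k hk.
by rewrite (sqnormBC (x 1%N)) (sqnormBC xstar).
Qed.
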